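(* Let $C$ be a coalgebra over a field $k$ and let $\sigma:C\otimes C\to k$ be a strong $\mathcal{D}$-map, i.e. a $k$-bilinear map with $\sum\sigma(c_{(1)}\otimes d)c_{(2)}=\sum\sigma(c_{(2)}\otimes d)c_{(1)}$ for all $c,d\in C$. Let $(M,\rho)$ be a right $C$-comodule. Then the map $$R_\sigma:M\otimes M\to M\otimes M,\qquad R_\sigma(m\otimes n)=\sum\sigma(m_{<1>}\otimes n_{<1>})\,m_{<0>}\otimes n_{<0>}$$ is a solution of the Long equation, i.e. $R_\sigma^{12}R_\sigma^{13}=R_\sigma^{13}R_\sigma^{12}$ and $R_\sigma^{12}R_\sigma^{23}=R_\sigma^{23}R_\sigma^{12}$ in $\mathrm{End}_k(M\otimes M\otimes M)$.
   Context: Sweedler notation: $\Delta(c)=\sum c_{(1)}\otimes c_{(2)}$ and $\rho(m)=\sum m_{<0>}\otimes m_{<1>}$. For $R\in\mathrm{End}_k(M\otimes M)$: $R^{12}=R\otimes I$, $R^{23}=I\otimes R$, $R^{13}=(I\otimes\tau)(R\otimes I)(I\otimes\tau)$, where $\tau(m\otimes n)=n\otimes m$. *)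

(* Defs.v *)
(* Tensor products are not in the library: an element of
   V (x) W is presented by a finite list of pairs (its Sweedler expression),
   and two such presentations are identified exactly when every bilinear map
   out of V x W (into any k-vector space) takes the same value on them --
   i.e. equality in the tensor product via its universal property. *)
From HB Require Import structures.
From mathcomp Require Import all_boot all_order all_algebra.
Set Implicit Arguments. Unset Strict Implicit. Unset Printing Implicit Defensive.
Import Order.TTheory GRing.Theory Num.Theory.
Local Open Scope ring_scope.

Section Tensors.
Variable k : fieldType.

Definition slinear (V : lmodType k) (f : V -> k) :=
  forall (a : k) (x y : V), f (a *: x + y) = a * f x + f y.

Definition sbilinear (V W : lmodType k) (f : V -> W -> k) :=
  (forall w, slinear (fun v => f v w)) /\ (forall v, slinear (f v)).

Definition bilin (V W U : lmodType k) (f : V -> W -> U) :=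
  (forall w, linear (fun v => f v w)) /\ (forall v, linear (f v)).

Definition trilin (V W X U : lmodType k) (f : V -> W -> X -> U) :=
  [/\ forall w x, linear (fun v => f v w x),
      forall v x, linear (fun w => f v w x) &
      forall v w, linear (f v w)].

Definition teq2 (V W : lmodType k) (s t : seq (V * W)) : Prop :=
  forall (U : lmodType k) (f : V -> W -> U), bilin f ->
    \sum_(x <- s) f x.1 x.2 = \sum_(x <- t) f x.1 x.2.

Definition teq3 (V W X : lmodType k) (s t : seq (V * W * X)) : Prop :=
  forall (U : lmodType k) (f : V -> W -> X -> U), trilin f ->
    \sum_(x <- s) f x.1.1 x.1.2 x.2 = \sum_(x <- t) f x.1.1 x.1.2 x.2.

Definition tscale1 (V W : lmodType k) (a : k) (s : seq (V * W)) :=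
  [seq (a *: x.1, x.2) | x <- s].

Definition is_coalgebra (C : lmodType k) (Delta : C -> seq (C * C))
    (eps : C -> k) : Prop :=
  [/\ (forall a c d, teq2 (Delta (a *: c + d)) (tscale1 a (Delta c) ++ Delta d)),
      slinear eps,
      (* coassociativity: (Delta (x) I) Delta = (I (x) Delta) Delta *)
      (forall c, teq3
         (flatten [seq [seq (y.1, y.2, x.2) | y <- Delta x.1] | x <- Delta c])
         (flatten [seq [seq (x.1, z.1, z.2) | z <- Delta x.2] | x <- Delta c])),
      (forall c, \sum_(x <- Delta c) eps x.1 *: x.2 = c) &
      (forall c, \sum_(x <- Delta c) eps x.2 *: x.1 = c)].

Definition is_right_comodule (C : lmodType k) (Delta : C -> seq (C * C))
    (eps : C -> k) (M : lmodType k) (rho : M -> seq (M * C)) : Prop :=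
  [/\ (forall a m n, teq2 (rho (a *: m + n)) (tscale1 a (rho m) ++ rho n)),
      (* (rho (x) I) rho = (I (x) Delta) rho *)
      (forall m, teq3
         (flatten [seq [seq (y.1, y.2, x.2) | y <- rho x.1] | x <- rho m])
         (flatten [seq [seq (x.1, z.1, z.2) | z <- Delta x.2] | x <- rho m])) &
      (forall m, \sum_(x <- rho m) eps x.2 *: x.1 = m)].

Definition strong_Dmap (C : lmodType k) (Delta : C -> seq (C * C))
    (sigma : C -> C -> k) : Prop :=
  sbilinear sigma /\
  forall c d, \sum_(x <- Delta c) sigma x.1 d *: x.2
            = \sum_(x <- Delta c) sigma x.2 d *: x.1.

Definition Rsigma (C M : lmodType k) (rho : M -> seq (M * C))
    (sigma : C -> C -> k) (m n : M) : seq (M * M) :=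
  flatten [seq [seq (sigma x.2 y.2 *: x.1, y.1) | y <- rho n] | x <- rho m].

(* R^12 = R (x) I, R^23 = I (x) R, tau23 = I (x) tau, R^13 = tau23 R^12 tau23,
   acting on (presentations of) elements of M (x) M (x) M *)
Definition op12 (M : lmodType k) (R : M -> M -> seq (M * M))
    (s : seq (M * M * M)) : seq (M * M * M) :=
  flatten [seq [seq (r.1, r.2, x.2) | r <- R x.1.1 x.1.2] | x <- s].
Definition op23 (M : lmodType k) (R : M -> M -> seq (M * M))
    (s : seq (M * M * M)) : seq (M * M * M) :=
  flatten [seq [seq (x.1.1, r.1, r.2) | r <- R x.1.2 x.2] | x <- s].
Definition tau23 (M : lmodType k) (s : seq (M * M * M)) : seq (M * M * M) :=
  [seq (x.1.1, x.2, x.1.2) | x <- s].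
Definition op13 (M : lmodType k) (R : M -> M -> seq (M * M))
    (s : seq (M * M * M)) : seq (M * M * M) :=
  tau23 (op12 R (tau23 s)).

End Tensors.

(* Main.v *)
Require Import Defs.
From HB Require Import structures.
From mathcomp Require Import all_boot all_order all_algebra.
Set Implicit Arguments. Unset Strict Implicit. Unset Printing Implicit Defensive.
Import Order.TTheory GRing.Theory Num.Theory.
Local Open Scope ring_scope.


Section H.
Variable k : fieldType.

Lemma lin0 (V U : lmodType k) (F : V -> U) : GRing.linear_for *:%R F -> F 0 = 0.
Proof.
move=> H; have := H 1 0 0; rewrite !scale1r !addr0 -{1}[F 0]addr0.
by move=> /(congr1 (fun x => - F 0 + x)); rewrite !addKr => <-.
Qed.

Lemma linZ (V U : lmodType k) (F : V -> U) c u : GRing.linear_for *:%R F -> F (c *: u) = c *: F u.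
Proof. by move=> H; have := H c u 0; rewrite !addr0 (lin0 H) addr0. Qed.

Lemma slin0 (V : lmodType k) (F : V -> k) : slinear F -> F 0 = 0.
Proof.
move=> H; have := H 1 0 0; rewrite !scale1r !addr0 mul1r -{1}[F 0]addr0.
by move=> /(congr1 (fun x => - F 0 + x)); rewrite !addKr => <-.
Qed.

Lemma slin_sum (V : lmodType k) (F : V -> k) (I : Type) (s : seq I) (a : I -> k) (v : I -> V) :
  slinear F -> F (\sum_(i <- s) a i *: v i) = \sum_(i <- s) a i * F (v i).
Proof.
move=> H; elim: s => [|i s IH]; first by rewrite !big_nil slin0.
by rewrite !big_cons H IH.
Qed.

Lemma lin_sum (V U : lmodType k) (I : Type) (s : seq I) (F : I -> V -> U) :
  (forall i, GRing.linear_for *:%R (F i)) ->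
  GRing.linear_for *:%R (fun v => \sum_(i <- s) F i v).
Proof.
move=> H a u v /=; rewrite scaler_sumr -big_split /=.
by apply: eq_bigr => i _; rewrite H.
Qed.

Lemma lin_scale (V U : lmodType k) (c : k) (F : V -> U) :
  GRing.linear_for *:%R F -> GRing.linear_for *:%R (fun v => c *: F v).
Proof. by move=> H a u v /=; rewrite H scalerDr !scalerA mulrC. Qed.

Lemma slin_scale (V U : lmodType k) (X : U) (g : V -> k) :
  slinear g -> GRing.linear_for *:%R (fun v => g v *: X).
Proof. by move=> H a u v /=; rewrite H scalerDl scalerA. Qed.

Lemma sum_op12 (M U : lmodType k) (R : M -> M -> seq (M * M)) s (F : M * M * M -> U) :
  \sum_(t <- op12 R s) F t = \sum_(x <- s) \sum_(r <- R x.1.1 x.1.2) F (r.1, r.2, x.2).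
Proof. by rewrite /op12 big_flatten big_map; apply: eq_bigr => x _; rewrite big_map. Qed.

Lemma sum_op23 (M U : lmodType k) (R : M -> M -> seq (M * M)) s (F : M * M * M -> U) :
  \sum_(t <- op23 R s) F t = \sum_(x <- s) \sum_(r <- R x.1.2 x.2) F (x.1.1, r.1, r.2).
Proof. by rewrite /op23 big_flatten big_map; apply: eq_bigr => x _; rewrite big_map. Qed.

Lemma sum_tau23 (M U : lmodType k) s (F : M * M * M -> U) :
  \sum_(t <- tau23 s) F t = \sum_(x <- s) F (x.1.1, x.2, x.1.2).
Proof. by rewrite /tau23 big_map. Qed.

Lemma sum_R (C M U : lmodType k) rho sigma (a b : M) (G : M * M -> U) :
  \sum_(r <- @Rsigma k C M rho sigma a b) G r
  = \sum_(x <- rho a) \sum_(y <- rho b) G (sigma x.2 y.2 *: x.1, y.1).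
Proof. by rewrite /Rsigma big_flatten big_map; apply: eq_bigr => x _; rewrite big_map. Qed.

Lemma rho_scale (C M U : lmodType k) (rho : M -> seq (M * C))
  (Hl : forall a m n, teq2 (rho (a *: m + n)) (tscale1 a (rho m) ++ rho n))
  (g : M -> C -> U) c m : bilin g ->
  \sum_(z <- rho (c *: m)) g z.1 z.2 = c *: \sum_(z <- rho m) g z.1 z.2.
Proof.
move=> Hg.
have H0 : \sum_(z <- rho 0) g z.1 z.2 = 0.
  have := Hl 1 0 0 U g Hg; rewrite !scale1r !addr0 big_cat /tscale1 big_map /=.
  under [in X in _ = X + _]eq_bigr do rewrite scale1r.
  by rewrite -{1}[X in X = _]addr0 => /(congr1 (fun x => - (\sum_(z <- rho 0) g z.1 z.2) + x)); rewrite !addKr => <-.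
have := Hl c m 0 U g Hg; rewrite addr0 => ->.
rewrite big_cat /= H0 addr0 /tscale1 big_map scaler_sumr; apply: eq_bigr => z _ /=.
by rewrite (linZ _ _ (proj1 Hg z.2)).
Qed.

End H.

Section H2.
Variable k : fieldType.

Lemma coassoc_sum (C M U : lmodType k) (Delta : C -> seq (C * C)) (rho : M -> seq (M * C))
  (Hco : forall m, teq3
         (flatten [seq [seq (y.1, y.2, x.2) | y <- rho x.1] | x <- rho m])
         (flatten [seq [seq (x.1, z.1, z.2) | z <- Delta x.2] | x <- rho m]))
  (h : M -> C -> C -> U) m : trilin h ->
  \sum_(x <- rho m) \sum_(z <- rho x.1) h z.1 z.2 x.2
  = \sum_(x <- rho m) \sum_(u <- Delta x.2) h x.1 u.1 u.2.
Proof.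
move=> Hh; have := Hco m U h Hh; rewrite !big_flatten !big_map /= => E.
transitivity (\sum_(j <- rho m) \sum_(i <- [seq (y.1, y.2, j.2) | y <- rho j.1]) h i.1.1 i.1.2 i.2).
  by apply: eq_bigr => x _; rewrite big_map.
rewrite E; apply: eq_bigr => x _; rewrite big_map.
done.
Qed.

Lemma expand (C M U : lmodType k) (Delta : C -> seq (C * C)) (rho : M -> seq (M * C))
  (sigma : C -> C -> k)
  (Hs1 : forall w : C, slinear (sigma^~ w))
  (Hl : forall a m n, teq2 (rho (a *: m + n)) (tscale1 a (rho m) ++ rho n))
  (Hco : forall m, teq3
         (flatten [seq [seq (y.1, y.2, x.2) | y <- rho x.1] | x <- rho m])
         (flatten [seq [seq (x.1, z.1, z.2) | z <- Delta x.2] | x <- rho m]))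
  (G : M -> M -> M -> U) (HG : forall b c, GRing.linear_for *:%R (fun a => G a b c)) m q r :
  \sum_(x <- rho m) \sum_(y <- rho q) \sum_(z <- rho (sigma x.2 y.2 *: x.1))
     \sum_(w <- rho r) G (sigma z.2 w.2 *: z.1) w.1 y.1
  = \sum_(x <- rho m) \sum_(u <- Delta x.2) \sum_(y <- rho q) \sum_(w <- rho r)
     (sigma u.2 y.2 * sigma u.1 w.2) *: G x.1 w.1 y.1.
Proof.
pose g (y : M * C) (a : M) (c : C) := \sum_(w <- rho r) sigma c w.2 *: G a w.1 y.1.
have Hg : forall y, bilin (g y).
  move=> y; split => [c|a]; rewrite /g.
    by apply: lin_sum => w; apply: lin_scale.
  by apply: lin_sum => w; apply: slin_scale.
transitivity (\sum_(x <- rho m) \sum_(y <- rho q) \sum_(z <- rho (sigma x.2 y.2 *: x.1)) g y z.1 z.2).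
  apply: eq_bigr => x _; apply: eq_bigr => y _; apply: eq_bigr => z _.
  by apply: eq_bigr => w _; rewrite (linZ _ _ (HG _ _)).
pose h (a : M) (c1 c2 : C) := \sum_(y <- rho q) \sum_(w <- rho r)
   sigma c2 y.2 *: (sigma c1 w.2 *: G a w.1 y.1).
transitivity (\sum_(x <- rho m) \sum_(z <- rho x.1) h z.1 z.2 x.2).
  apply: eq_bigr => x _.
  transitivity (\sum_(y <- rho q) \sum_(z <- rho x.1) sigma x.2 y.2 *: g y z.1 z.2).
    apply: eq_bigr => y _; rewrite (rho_scale Hl _ _ (Hg y)) scaler_sumr //.
  rewrite exchange_big /=; apply: eq_bigr => z _; rewrite /h.
  by apply: eq_bigr => y _; rewrite /g scaler_sumr.
rewrite (coassoc_sum Hco).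
  apply: eq_bigr => x _; apply: eq_bigr => u _; rewrite /h.
  by apply: eq_bigr => y _; apply: eq_bigr => w _; rewrite scalerA.
split => [c1 c2|a c2|a c1]; rewrite /h.
- by apply: lin_sum => y; apply: lin_sum => w; do 2 apply: lin_scale.
- by apply: lin_sum => y; apply: lin_sum => w; apply: lin_scale; apply: slin_scale.
- by apply: lin_sum => y; apply: lin_sum => w; apply: slin_scale.
Qed.

End H2.

Section H3.
Variable k : fieldType.
Variables (C M U : lmodType k) (Delta : C -> seq (C * C)) (rho : M -> seq (M * C))
  (sigma : C -> C -> k).

Lemma expand2
  (Hs1 : forall w : C, slinear (sigma^~ w))
  (Hs2 : forall v : C, slinear (sigma v))
  (Hl : forall a m n, teq2 (rho (a *: m + n)) (tscale1 a (rho m) ++ rho n))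
  (Hco : forall m, teq3
         (flatten [seq [seq (y.1, y.2, x.2) | y <- rho x.1] | x <- rho m])
         (flatten [seq [seq (x.1, z.1, z.2) | z <- Delta x.2] | x <- rho m]))
  (f : M -> M -> M -> U)
  (Hf1 : forall w x : M, GRing.linear_for *:%R (fun v : M => f v w x))
  (Hf2 : forall v x : M, GRing.linear_for *:%R ((f v)^~ x)) m n p :
  \sum_(a <- rho n) \sum_(b <- rho p) \sum_(x <- rho m)
     \sum_(z <- rho (sigma a.2 b.2 *: a.1)) f (sigma x.2 z.2 *: x.1) z.1 b.1
  = \sum_(a <- rho n) \sum_(u <- Delta a.2) \sum_(b <- rho p) \sum_(x <- rho m)
     (sigma u.2 b.2 * sigma x.2 u.1) *: f x.1 a.1 b.1.
Proof.
pose g (b : M * C) (z1 : M) (c : C) := \sum_(x <- rho m) sigma x.2 c *: f x.1 z1 b.1.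
have Hg : forall b, bilin (g b).
  move=> b; split => [c|a]; rewrite /g.
    by apply: lin_sum => w; apply: lin_scale.
  by apply: lin_sum => w; apply: slin_scale.
pose h (z1 : M) (c1 c2 : C) := \sum_(b <- rho p) \sum_(x <- rho m)
   sigma c2 b.2 *: (sigma x.2 c1 *: f x.1 z1 b.1).
transitivity (\sum_(a <- rho n) \sum_(z <- rho a.1) h z.1 z.2 a.2).
  apply: eq_bigr => a _.
  transitivity (\sum_(b <- rho p) \sum_(z <- rho (sigma a.2 b.2 *: a.1)) g b z.1 z.2).
    apply: eq_bigr => b _; rewrite exchange_big /=; apply: eq_bigr => z _.
    by apply: eq_bigr => x _; rewrite (linZ _ _ (Hf1 _ _)).
  transitivity (\sum_(b <- rho p) \sum_(z <- rho a.1) sigma a.2 b.2 *: g b z.1 z.2).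
    by apply: eq_bigr => b _; rewrite (rho_scale Hl _ _ (Hg b)) scaler_sumr.
  rewrite exchange_big /=; apply: eq_bigr => z _; rewrite /h.
  by apply: eq_bigr => b _; rewrite /g scaler_sumr.
rewrite (coassoc_sum Hco).
  apply: eq_bigr => a _; apply: eq_bigr => u _; rewrite /h.
  by apply: eq_bigr => b _; apply: eq_bigr => x _; rewrite scalerA.
split => [c1 c2|a c2|a c1]; rewrite /h.
- by apply: lin_sum => y; apply: lin_sum => w; do 2 apply: lin_scale.
- by apply: lin_sum => y; apply: lin_sum => w; apply: lin_scale; apply: slin_scale.
- by apply: lin_sum => y; apply: lin_sum => w; apply: slin_scale.
Qed.

Lemma expand3
  (Hs1 : forall w : C, slinear (sigma^~ w))
  (Hs2 : forall v : C, slinear (sigma v))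
  (Hco : forall m, teq3
         (flatten [seq [seq (y.1, y.2, x.2) | y <- rho x.1] | x <- rho m])
         (flatten [seq [seq (x.1, z.1, z.2) | z <- Delta x.2] | x <- rho m]))
  (f : M -> M -> M -> U)
  (Hf1 : forall w x : M, GRing.linear_for *:%R (fun v : M => f v w x))
  (Hf2 : forall v x : M, GRing.linear_for *:%R ((f v)^~ x)) m n p :
  \sum_(x <- rho m) \sum_(w <- rho n) \sum_(z <- rho w.1) \sum_(y <- rho p)
     f (sigma x.2 w.2 *: x.1) (sigma z.2 y.2 *: z.1) y.1
  = \sum_(a <- rho n) \sum_(u <- Delta a.2) \sum_(x <- rho m) \sum_(y <- rho p)
     (sigma x.2 u.2 * sigma u.1 y.2) *: f x.1 a.1 y.1.
Proof.
pose h (z1 : M) (c1 c2 : C) := \sum_(x <- rho m) \sum_(y <- rho p)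
   sigma x.2 c2 *: (sigma c1 y.2 *: f x.1 z1 y.1).
transitivity (\sum_(w <- rho n) \sum_(z <- rho w.1) h z.1 z.2 w.2).
  rewrite exchange_big /=; apply: eq_bigr => w _.
  rewrite exchange_big /=; apply: eq_bigr => z _; rewrite /h.
  apply: eq_bigr => x _; apply: eq_bigr => y _.
  by rewrite (linZ _ _ (Hf1 _ _)) (linZ _ _ (Hf2 _ _)).
rewrite (coassoc_sum Hco).
  apply: eq_bigr => a _; apply: eq_bigr => u _; rewrite /h.
  by apply: eq_bigr => b _; apply: eq_bigr => x _; rewrite scalerA.
split => [c1 c2|a c2|a c1]; rewrite /h.
- by apply: lin_sum => y; apply: lin_sum => w; do 2 apply: lin_scale.
- by apply: lin_sum => y; apply: lin_sum => w; apply: lin_scale; apply: slin_scale.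
- by apply: lin_sum => y; apply: lin_sum => w; apply: slin_scale.
Qed.

End H3.
Theorem proposition4p2 (k : fieldType) (C : lmodType k)
    (Delta : C -> seq (C * C)) (eps : C -> k) (sigma : C -> C -> k)
    (M : lmodType k) (rho : M -> seq (M * C)) :
  is_coalgebra Delta eps ->
  strong_Dmap Delta sigma ->
  is_right_comodule Delta eps rho ->
  forall m n p : M,
    teq3 (op12 (Rsigma rho sigma) (op13 (Rsigma rho sigma) [:: (m, n, p)]))
         (op13 (Rsigma rho sigma) (op12 (Rsigma rho sigma) [:: (m, n, p)]))
 /\ teq3 (op12 (Rsigma rho sigma) (op23 (Rsigma rho sigma) [:: (m, n, p)]))
         (op23 (Rsigma rho sigma) (op12 (Rsigma rho sigma) [:: (m, n, p)])).
Proof.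
move=> HC [[Hs1 Hs2] HS] [Hl Hco Hcu] m n p; split=> U f [Hf1 Hf2 Hf3].
- rewrite /op13 (@sum_op12 k M U) /= (@sum_tau23 k M U) (@sum_op12 k M U) big_seq1 /= (@sum_R k C M U).
  under [LHS]eq_bigr => x _ do under eq_bigr => y _ do rewrite (@sum_R k C M U) /=.
  rewrite (@sum_tau23 k M U) (@sum_op12 k M U) /= (@sum_tau23 k M U) (@sum_op12 k M U) big_seq1 /= (@sum_R k C M U).
  under [RHS]eq_bigr => x _ do under eq_bigr => y _ do rewrite (@sum_R k C M U) /=.
  rewrite (expand Hs1 Hl Hco (Hf1)).
  rewrite (expand (G := fun a b c => f a c b) Hs1 Hl Hco); last by move=> b c; apply: Hf1.
  apply: eq_bigr => x _; rewrite exchange_big [RHS]exchange_big /=.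
  under eq_bigr => y _ do rewrite exchange_big /=.
  under [RHS]eq_bigr => j _ do rewrite exchange_big /=.
  rewrite [RHS]exchange_big /=.
  apply: eq_bigr => y _; apply: eq_bigr => w _.
  rewrite -!scaler_suml; congr (_ *: _).
  have := congr1 (sigma^~ y.2) (HS x.2 w.2); rewrite /= !(slin_sum _ _ _ (Hs1 y.2)).
  by move=> E; under eq_bigr do rewrite mulrC; rewrite E.
- rewrite [LHS](@sum_op12 k M U) [LHS](@sum_op23 k M U) big_seq1 /= (@sum_R k C M U).
  under [LHS]eq_bigr => x _ do under eq_bigr => y _ do rewrite (@sum_R k C M U) /=.
  rewrite [RHS](@sum_op23 k M U) [RHS](@sum_op12 k M U) big_seq1 /= (@sum_R k C M U).
  under [RHS]eq_bigr => x _ do under eq_bigr => y _ do rewrite (@sum_R k C M U) /=.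
  rewrite (expand2 Hs1 Hs2 Hl Hco Hf1 Hf2) (expand3 Hs1 Hs2 Hco Hf1 Hf2).
  apply: eq_bigr => a _; rewrite exchange_big /=.
  under eq_bigr => b _ do rewrite exchange_big /=.
  under [RHS]eq_bigr => x _ do rewrite exchange_big /=.
  rewrite [RHS]exchange_big /=.
  under [RHS]eq_bigr => y _ do rewrite exchange_big /=.
  apply: eq_bigr => b _; apply: eq_bigr => x _.
  rewrite -!scaler_suml; congr (_ *: _).
  have := congr1 (sigma x.2) (HS a.2 b.2); rewrite /= !(slin_sum _ _ _ (Hs2 x.2)).
  move=> E; rewrite -E; apply: eq_bigr => u _; exact: mulrC.
Qed.
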